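(* Let $h>0$ and $0\le \alpha<1/4$. In the planar setting described in the context, let $g\in G$ be any target point. Then there exist two camera locations $s_p,s_q\in S$ such that $$\varepsilon(g,\{s_p,s_q\})\;\le\;\sqrt{\frac{1+2\alpha}{1-4\alpha}}\;\varepsilon(g,S).$$
   Context: Work in $\mathbb{R}^2$ with coordinates $(x,z)$. The ground line is $G=\{z=0\}$ and the viewing line is $S=\{z=h\}$, $h>0$. Fix an error bound $\alpha>0$ (radians). For a point $s$ and a unit vector $u$, the wedge $W(s,u)=\{s+rv:\ r\ge 0,\ |v|=1,\ \angle(v,u)\le\alpha\}$; it has apex $s$ and opening angle $2\alpha$. For a target $g$ and a camera location $s$, let $\mathcal W(g,s)$ be the set of all wedges $W(s,u)$, over all unit vectors $u$, that contain $g$. For a set $C\subseteq S$ of camera locations, the worst-case uncertainty is $$\varepsilon(g,C)=\sup\Big\{\operatorname{diam}\Big(\bigcap_{s\in C}W_s\Big):\ W_s\in\mathcal W(g,s)\ \text{for every } s\in C\Big\},$$ i.e. one wedge is chosen per camera so as to jointly maximize the diameter of the intersection. $\varepsilon(g,S)$ is the worst-case uncertainty obtained using all points of $S$ as cameras. *)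

(* Defs.v *)
From Stdlib Require Import Reals.
Open Scope R_scope.

Definition pt := (R * R)%type.

Definition padd (p q : pt) : pt := (fst p + fst q, snd p + snd q).
Definition pscale (r : R) (p : pt) : pt := (r * fst p, r * snd p).
Definition dot (p q : pt) : R := fst p * fst q + snd p * snd q.
Definition norm (p : pt) : R := sqrt (dot p p).
Definition dist (p q : pt) : R := sqrt ((fst p - fst q)^2 + (snd p - snd q)^2).
Definition unit_vec (v : pt) : Prop := norm v = 1.

Definition angle (v u : pt) : R := acos (dot v u).

Definition wedge (alpha : R) (s u : pt) (p : pt) : Prop :=
  exists r v, 0 <= r /\ unit_vec v /\ angle v u <= alpha /\ p = padd s (pscale r v).

Definition on_ground (g : pt) : Prop := snd g = 0.
Definition on_view (h : R) (s : pt) : Prop := snd s = h.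

Definition diam_le (A : pt -> Prop) (d : R) : Prop :=
  forall x y, A x -> A y -> dist x y <= d.

Definition admissible_choice (alpha : R) (g : pt) (C : pt -> Prop) (U : pt -> pt) : Prop :=
  forall s, C s -> unit_vec (U s) /\ wedge alpha s (U s) g.

Definition wedge_inter (alpha : R) (C : pt -> Prop) (U : pt -> pt) (p : pt) : Prop :=
  forall s, C s -> wedge alpha s (U s) p.

(* eps(g,C) <= d, where eps(g,C) is the supremum (in [0,+oo]) over admissible
   wedge choices of the diameter of the intersection. *)
Definition eps_le (alpha : R) (g : pt) (C : pt -> Prop) (d : R) : Prop :=
  forall U, admissible_choice alpha g C U -> diam_le (wedge_inter alpha C U) d.

(* eps(g,C1) <= c * eps(g,C2), as an inequality in [0,+oo] (c > 0):
   every real upper bound d of eps(g,C2) yields the bound c*d for eps(g,C1). *)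
Definition eps_rel_le (alpha : R) (g : pt) (C1 C2 : pt -> Prop) (c : R) : Prop :=
  forall d, eps_le alpha g C2 d -> eps_le alpha g C1 (c * d).

(* Main.v *)
Require Import Defs.
From Stdlib Require Import Reals Lra Psatz.
Open Scope R_scope.

Lemma cone1 K s c d A B r : 0 <= K -> 0 <= s -> K*K + s*s = 1 -> c*c + d*d = 1 ->
  0 <= r -> r*r = A*A + B*B -> c*A + d*B >= K*r ->
  K*(c*B - d*A) <= s*(c*A+d*B) /\ -(K*(c*B - d*A)) <= s*(c*A+d*B).
Proof.
  intros HK Hs H1 H2 Hr Hrr HX.
  remember (c*A+d*B) as X. remember (c*B - d*A) as Y.
  assert (HXY : X*X + Y*Y = r*r) by (subst X Y; rewrite Hrr; replace (A*A+B*B) with ((c*c+d*d)*(A*A+B*B)) by (rewrite H2; ring); ring).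
  assert (HX0 : 0 <= X) by nra.
  assert (HKr : 0 <= K*r) by (apply Rmult_le_pos; auto).
  assert (HX2 : (K*r)*(K*r) <= X*X) by (apply Rmult_le_compat; lra).
  assert (Hsq : (K*Y)*(K*Y) <= (s*X)*(s*X)) by nra.
  assert (0 <= s*X) by nra.
  split; nra.
Qed.

Lemma cone_pair K s c d A1 B1 A2 B2 M : 0 <= K -> 0 <= s -> s < K -> K*K + s*s = 1 ->
  c*c + d*d = 1 -> K <= c ->
  K*(c*B1 - d*A1) <= s*(c*A1+d*B1) ->
  -(K*(c*B2 - d*A2)) <= s*(c*A2+d*B2) ->
  A1 <= M -> A2 <= M -> 0 <= M ->
  (B1 - B2)*(K*K - s*s) <= 2*K*s*M.
Proof.
  intros HK Hs HsK H1 H2 Hc Hi Hii HM1 HM2 HM.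
  assert (Hd : d*d <= s*s) by nra.
  assert (Hd1 : -s <= d <= s) by (split; nra).
  set (D1 := K*c - s*d). set (D2 := K*c + s*d).
  set (N1 := s*c + K*d). set (N2 := K*d - s*c).
  assert (HD1 : K*K - s*s <= D1) by (unfold D1; nra).
  assert (HD2 : K*K - s*s <= D2) by (unfold D2; nra).
  assert (HN1 : 0 <= N1) by (unfold N1; nra).
  assert (HN2 : N2 <= 0) by (unfold N2; nra).
  assert (E1a : B1*D1 <= A1*N1) by (unfold D1, N1; lra).
  assert (E1b : A1*N1 <= M*N1) by (apply Rmult_le_compat_r; lra).
  assert (E2a : A2*N2 <= B2*D2) by (unfold D2, N2; lra).
  assert (E2b : M*N2 <= A2*N2) by (nra).
  assert (Hcc : K*K <= c*c) by nra.
  assert (Hs1 : s*s*(K*K) <= s*s*(c*c)) by (apply Rmult_le_compat_l; nra).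
  assert (Hs2 : K*K*(d*d) <= K*K*(s*s)) by (apply Rmult_le_compat_l; nra).
  assert (HDD : K*K - s*s <= D1*D2).
  { unfold D1, D2. replace ((K*c - s*d)*(K*c+s*d)) with (K*K*(c*c) - s*s*(d*d)) by ring.
    replace (d*d) with (1 - c*c) by lra.
    assert (K*K*(c*c) + s*s*(c*c) = c*c) by (transitivity ((K*K+s*s)*(c*c)); [ring|rewrite H1; ring]).
    lra. }
  assert (Hid : N1*D2 - N2*D1 = 2*K*s).
  { unfold N1, D1, N2, D2. transitivity (2*K*s*(c*c+d*d)); [ring| rewrite H2; ring]. }
  assert (E3 : (B1 - B2)*(D1*D2) <= 2*K*s*M).
  { assert (Hss : s*s < K*K) by nra.
    assert (B1*D1*D2 <= M*N1*D2) by (apply Rmult_le_compat_r; lra).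
    assert (M*N2*D1 <= B2*D2*D1) by (apply Rmult_le_compat_r; lra).
    replace ((B1 - B2)*(D1*D2)) with (B1*D1*D2 - B2*D2*D1) by ring.
    rewrite <- Hid. lra. }
  destruct (Rle_or_lt 0 (B1 - B2)).
  - assert ((B1 - B2)*(K*K - s*s) <= (B1-B2)*(D1*D2)) by (apply Rmult_le_compat_l; lra). lra.
  - assert (0 <= K*K - s*s) by nra. assert (0 <= 2*K*s*M) by (repeat apply Rmult_le_pos; lra). nra.
Qed.
Lemma unit_sq v : unit_vec v -> fst v * fst v + snd v * snd v = 1.
Proof.
  unfold unit_vec, norm, dot. intro H.
  assert (0 <= fst v * fst v + snd v * snd v) by nra.
  rewrite <- (sqrt_sqrt _ H0). rewrite H. ring.
Qed.

Lemma wedge_cos alpha s u p : 0 <= alpha <= PI -> unit_vec u -> wedge alpha s u p ->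
  exists r v1 v2, 0 <= r /\ v1*v1 + v2*v2 = 1 /\ v1 * fst u + v2 * snd u >= cos alpha /\
    fst p = fst s + r*v1 /\ snd p = snd s + r*v2.
Proof.
  intros Ha Hu [r [v [Hr [Hv [Hang Hp]]]]].
  apply unit_sq in Hu. apply unit_sq in Hv.
  exists r, (fst v), (snd v). repeat split; auto.
  - unfold angle, dot in Hang.
    set (t := fst v * fst u + snd v * snd u) in *.
    assert (Ht : -1 <= t <= 1).
    { assert (t*t <= 1).
      { assert (E : t*t + (fst v * snd u - snd v * fst u)*(fst v * snd u - snd v * fst u)
                = (fst v * fst v + snd v * snd v)*(fst u * fst u + snd u * snd u)) by (unfold t; ring).
        rewrite Hu, Hv in E.
        pose proof (Rle_0_sqr (fst v * snd u - snd v * fst u)). unfold Rsqr in *. lra. }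
      split; nra. }
    destruct (Rle_or_lt (cos alpha) t) as [H|H]; [lra|].
    exfalso. rewrite <- (cos_acos t Ht) in H.
    pose proof (acos_bound t).
    destruct (Rle_or_lt (acos t) alpha) as [H2|H2]; [|lra].
    destruct H2 as [H2|H2].
    + pose proof (cos_decreasing_1 (acos t) alpha ltac:(lra) ltac:(lra) ltac:(lra) ltac:(lra) H2). lra.
    + rewrite H2 in H. lra.
  - rewrite Hp. simpl. ring.
  - rewrite Hp. simpl. ring.
Qed.

Lemma acos_le t alpha : 0 <= alpha <= PI -> cos alpha <= t -> t <= 1 -> -1 <= t -> acos t <= alpha.
Proof.
  intros Ha H1 H2 H3.
  destruct (Rle_or_lt (acos t) alpha) as [H|H]; [lra|].
  pose proof (acos_bound t).
  pose proof (cos_decreasing_1 alpha (acos t) ltac:(lra) ltac:(lra) ltac:(lra) ltac:(lra) H).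
  rewrite cos_acos in H4 by lra. lra.
Qed.

Definition cc (u : pt) e1 e2 := fst u * e1 + snd u * e2.
Definition dd (u : pt) e1 e2 := - fst u * e2 + snd u * e1.
Definition AA (p s : pt) e1 e2 := (fst p - fst s) * e1 + (snd p - snd s) * e2.
Definition BB (p s : pt) e1 e2 := - (fst p - fst s) * e2 + (snd p - snd s) * e1.

Lemma cd_unit u e1 e2 : unit_vec u -> e1*e1+e2*e2 = 1 ->
  cc u e1 e2 * cc u e1 e2 + dd u e1 e2 * dd u e1 e2 = 1.
Proof.
  intros Hu He. apply unit_sq in Hu. unfold cc, dd.
  transitivity ((fst u * fst u + snd u * snd u)*(e1*e1+e2*e2)); [ring|]. rewrite Hu, He; ring.
Qed.

Lemma frame alpha s u p e1 e2 : 0 <= alpha <= PI -> unit_vec u -> e1*e1+e2*e2 = 1 ->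
  wedge alpha s u p ->
  exists r, 0 <= r /\ r*r = AA p s e1 e2 * AA p s e1 e2 + BB p s e1 e2 * BB p s e1 e2 /\
    cc u e1 e2 * AA p s e1 e2 + dd u e1 e2 * BB p s e1 e2 >= cos alpha * r.
Proof.
  intros Ha Hu He Hw.
  destruct (wedge_cos _ _ _ _ Ha Hu Hw) as [r [v1 [v2 [Hr [Hv [Hd [H1 H2]]]]]]].
  exists r. unfold AA, BB, cc, dd. rewrite H1, H2.
  replace (fst s + r * v1 - fst s) with (r*v1) by ring.
  replace (snd s + r * v2 - snd s) with (r*v2) by ring.
  split; [auto|split].
  - transitivity (r*r*((v1*v1+v2*v2)*(e1*e1+e2*e2))); [rewrite Hv, He; ring| ring].
  - replace ((fst u * e1 + snd u * e2) * (r * v1 * e1 + r * v2 * e2) +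
     (- fst u * e2 + snd u * e1) * (- (r * v1) * e2 + r * v2 * e1)) with
     (r * (v1 * fst u + v2 * snd u) * (e1*e1+e2*e2)) by ring.
    rewrite He. nra.
Qed.

Lemma frame_c alpha s u g e1 e2 R : 0 <= alpha <= PI -> unit_vec u -> e1*e1+e2*e2 = 1 ->
  0 < R -> fst g - fst s = R*e1 -> snd g - snd s = R*e2 ->
  wedge alpha s u g -> cos alpha <= cc u e1 e2.
Proof.
  intros Ha Hu He HR Hg1 Hg2 Hw.
  destruct (wedge_cos _ _ _ _ Ha Hu Hw) as [r [v1 [v2 [Hr [Hv [Hd [H1 H2]]]]]]].
  assert (E1 : r*v1 = R*e1) by lra.
  assert (E2 : r*v2 = R*e2) by lra.
  assert (Err : r*r = R*R).
  { transitivity ((r*v1)*(r*v1)+(r*v2)*(r*v2)).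
    - transitivity (r*r*(v1*v1+v2*v2)); [rewrite Hv; ring| ring].
    - rewrite E1, E2. transitivity (R*R*(e1*e1+e2*e2)); [ring| rewrite He; ring]. }
  assert (Er : r = R) by nra.
  subst r.
  assert (R * (v1 * fst u + v2 * snd u) = R * cc u e1 e2).
  { unfold cc. replace (R * (v1 * fst u + v2 * snd u)) with ((R*v1) * fst u + (R*v2) * snd u) by ring.
    rewrite E1, E2. ring. }
  nra.
Qed.

Lemma norm_scale_unit (w : pt) : 0 < dot w w -> unit_vec (pscale (/ norm w) w).
Proof.
  intros H. unfold unit_vec, norm, pscale, dot in *. simpl.
  set (n := sqrt (fst w * fst w + snd w * snd w)).
  assert (Hn : n*n = fst w * fst w + snd w * snd w) by (apply sqrt_sqrt; lra).
  assert (Hn0 : 0 < n) by (apply sqrt_lt_R0; lra).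
  replace (/ n * fst w * (/ n * fst w) + / n * snd w * (/ n * snd w)) with
    ((fst w * fst w + snd w * snd w) / (n*n)) by (field; lra).
  rewrite <- Hn. unfold Rdiv. rewrite Rinv_r by nra. apply sqrt_1.
Qed.

Lemma bisect_dot a1 a2 b1 b2 K : a1*a1+a2*a2 = 1 -> b1*b1+b2*b2 = 1 -> 0 < K ->
  2*K*K - 1 <= a1*b1+a2*b2 ->
  let w := (a1+b1, a2+b2) : pt in
  0 < dot w w /\
  K <= a1 * fst (pscale (/ norm w) w) + a2 * snd (pscale (/ norm w) w) <= 1.
Proof.
  intros Ha Hb HK Hc w.
  set (c0 := a1*b1+a2*b2) in *.
  assert (Hc1 : c0 <= 1).
  { assert (E : c0*c0 + (a1*b2-a2*b1)*(a1*b2-a2*b1) = (a1*a1+a2*a2)*(b1*b1+b2*b2)) by (unfold c0; ring).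
    rewrite Ha, Hb in E. pose proof (Rle_0_sqr (a1*b2-a2*b1)). unfold Rsqr in *. nra. }
  assert (Hww : dot w w = 2 + 2*c0).
  { unfold dot, w; simpl. transitivity ((a1*a1+a2*a2)+(b1*b1+b2*b2)+2*c0); [unfold c0; ring| rewrite Ha, Hb; ring]. }
  assert (Hc2 : -1 < c0) by nra.
  split; [lra|].
  unfold norm. rewrite Hww. unfold pscale, w; simpl.
  set (n := sqrt (2 + 2*c0)).
  assert (Hn : n*n = 2+2*c0) by (apply sqrt_sqrt; lra).
  assert (Hn0 : 0 < n) by (apply sqrt_lt_R0; lra).
  replace (a1 * (/ n * (a1 + b1)) + a2 * (/ n * (a2 + b2))) with ((a1*a1+a2*a2 + c0)/n)
    by (unfold c0; field; lra). rewrite Ha.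
  split.
  - apply Rmult_le_reg_r with n; [lra|]. unfold Rdiv. rewrite Rmult_assoc, Rinv_l by lra.
    rewrite Rmult_1_r. nra.
  - apply Rmult_le_reg_r with n; [lra|]. unfold Rdiv. rewrite Rmult_assoc, Rinv_l by lra.
    rewrite Rmult_1_r. nra.
Qed.

Lemma wedge_intro alpha s u p r v : 0 <= alpha <= PI -> 0 <= r -> unit_vec v ->
  cos alpha <= dot v u <= 1 -> -1 <= dot v u -> p = padd s (pscale r v) -> wedge alpha s u p.
Proof.
  intros Ha Hr Hv [H1 H2] H3 Hp. exists r, v. repeat split; auto.
  unfold angle. apply acos_le; auto.
Qed.

Lemma key_ineq h m x V W : 0 < h -> 0 <= m -> 0 <= V -> 0 < W -> W*W + V*V = 1 ->
  m * (1 - V) = 2*h*V ->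
  W * (sqrt (x*x+h*h) * sqrt (x*x+(m+h)*(m+h))) <= x*x + h*(m+h).
Proof.
  intros Hh Hm HV HW HWV Hmv.
  set (N := x*x + h*(m+h)).
  assert (HN : 0 < N) by (unfold N; nra).
  set (P := sqrt (x*x+h*h) * sqrt (x*x+(m+h)*(m+h))).
  assert (HP0 : 0 <= P) by (unfold P; apply Rmult_le_pos; apply sqrt_pos).
  assert (HP : P*P = N*N + (x*m)*(x*m)).
  { unfold P. replace (sqrt (x * x + h * h) * sqrt (x * x + (m + h) * (m + h)) *
     (sqrt (x * x + h * h) * sqrt (x * x + (m + h) * (m + h)))) with
     ((sqrt (x * x + h * h) * sqrt (x * x + h * h)) * (sqrt (x * x + (m + h) * (m + h)) * sqrt (x * x + (m + h) * (m + h)))) by ring.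
    rewrite !sqrt_sqrt by nra. unfold N. ring. }
  assert (Hm2 : m = V*(2*h+m)) by lra.
  assert (HAM : (x*(2*h+m))*(x*(2*h+m)) <= N*N + (x*m)*(x*m)).
  { assert (N*N + (x*m)*(x*m) - (x*(2*h+m))*(x*(2*h+m)) = (x*x - h*(h+m))*(x*x - h*(h+m))) by (unfold N; ring).
    pose proof (Rle_0_sqr (x*x - h*(h+m))). unfold Rsqr in *. lra. }
  assert (E1 : (x*m)*(x*m) = V*V*((x*(2*h+m))*(x*(2*h+m)))) by (rewrite Hm2 at 1 2; ring).
  assert (E2 : (x*m)*(x*m) <= V*V*(N*N + (x*m)*(x*m))).
  { rewrite E1 at 1. apply Rmult_le_compat_l; [nra|auto]. }
  assert (E3 : W*W*(P*P) <= N*N).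
  { rewrite HP. replace (W*W) with (1 - V*V) by lra. nra. }
  destruct (Rle_or_lt (W*P) N) as [H|H]; [auto|].
  exfalso. assert (0 <= W*P) by nra.
  assert (N*N < (W*P)*(W*P)) by nra. nra.
Qed.

Definition Ulow (h m : R) (g s : pt) : pt :=
  let x := fst g - fst s in
  let na := sqrt (x*x + h*h) in
  let nb := sqrt (x*x + (m+h)*(m+h)) in
  let w := (x/na + x/nb, -h/na + -(m+h)/nb) : pt in
  pscale (/ norm w) w.

Lemma lower h alpha g m V W : 0 < h -> 0 <= alpha <= PI -> 0 < cos alpha ->
  W = 2 * cos alpha * cos alpha - 1 -> 0 <= V -> 0 < W -> W*W + V*V = 1 -> 0 <= m ->
  m * (1 - V) = 2*h*V -> snd g = 0 ->
  forall s, snd s = h ->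
    unit_vec (Ulow h m g s) /\ wedge alpha s (Ulow h m g s) g /\
    wedge alpha s (Ulow h m g s) (fst g, -m).
Proof.
  intros Hh Ha HK HWd HV HW HWV Hm Hmv Hg s Hs.
  set (x := fst g - fst s).
  set (na := sqrt (x*x + h*h)). set (nb := sqrt (x*x + (m+h)*(m+h))).
  assert (Hna : 0 < na) by (apply sqrt_lt_R0; nra).
  assert (Hnb : 0 < nb) by (apply sqrt_lt_R0; nra).
  assert (Hna2 : na*na = x*x+h*h) by (apply sqrt_sqrt; nra).
  assert (Hnb2 : nb*nb = x*x+(m+h)*(m+h)) by (apply sqrt_sqrt; nra).
  set (a1 := x/na). set (a2 := -h/na). set (b1 := x/nb). set (b2 := -(m+h)/nb).
  assert (Ha1 : a1*a1+a2*a2 = 1) by (unfold a1, a2; replace (x / na * (x / na) + - h / na * (- h / na)) with ((x*x+h*h)/(na*na)) by (field; lra); rewrite Hna2; field; nra).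
  assert (Hb1 : b1*b1+b2*b2 = 1) by (unfold b1, b2; replace (x / nb * (x / nb) + - (m+h) / nb * (- (m+h) / nb)) with ((x*x+(m+h)*(m+h))/(nb*nb)) by (field; lra); rewrite Hnb2; field; nra).
  assert (Hc : 2 * cos alpha * cos alpha - 1 <= a1*b1+a2*b2).
  { rewrite <- HWd. unfold a1, a2, b1, b2.
    replace (x / na * (x / nb) + - h / na * (- (m + h) / nb)) with ((x*x + h*(m+h))/(na*nb)) by (field; lra).
    apply Rmult_le_reg_r with (na*nb); [nra|]. unfold Rdiv. rewrite Rmult_assoc, Rinv_l by nra.
    rewrite Rmult_1_r. apply (key_ineq h m x V W); auto. }
  destruct (bisect_dot a1 a2 b1 b2 (cos alpha) Ha1 Hb1 HK Hc) as [Hw0 [Hu1 Hu2]].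
  assert (Hc' : 2 * cos alpha * cos alpha - 1 <= b1*a1+b2*a2) by lra.
  destruct (bisect_dot b1 b2 a1 a2 (cos alpha) Hb1 Ha1 HK Hc') as [_ [Hv1 Hv2]].
  assert (EU : Ulow h m g s = pscale (/ norm (a1+b1, a2+b2)) (a1+b1, a2+b2)).
  { unfold Ulow. fold x. fold na nb. reflexivity. }
  assert (EU' : Ulow h m g s = pscale (/ norm (b1+a1, b2+a2)) (b1+a1, b2+a2)).
  { rewrite EU. rewrite (Rplus_comm a1 b1), (Rplus_comm a2 b2). reflexivity. }
  split; [rewrite EU; apply norm_scale_unit; auto|].
  split.
  - apply (wedge_intro _ _ _ _ na (a1, a2)); auto; try lra.
    all: try (rewrite EU; unfold dot; cbn [fst snd]; lra).
    all: try (rewrite EU; unfold dot; cbn [fst snd]; split; lra).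
    + unfold unit_vec, norm, dot. simpl. rewrite Ha1. apply sqrt_1.
    + destruct g as [g1 g2], s as [s1 s2]. simpl in *. unfold padd, pscale. simpl.
      unfold a1, a2. f_equal; unfold x; simpl; [field; lra | rewrite Hg, Hs; field; lra].
  - apply (wedge_intro _ _ _ _ nb (b1, b2)); auto; try lra.
    all: try (rewrite EU'; unfold dot; cbn [fst snd]; lra).
    all: try (rewrite EU'; unfold dot; cbn [fst snd]; split; lra).
    + unfold unit_vec, norm, dot. simpl. rewrite Hb1. apply sqrt_1.
    + destruct g as [g1 g2], s as [s1 s2]. simpl in *. unfold padd, pscale. simpl.
      unfold b1, b2. f_equal; unfold x; simpl; [field; lra | rewrite Hs; field; lra].
Qed.

Lemma final_alg (P : R -> R -> Prop) h W V E lp mp lq mq :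
  0 < h -> 0 <= V -> V < W -> E * (W - V) = 2*h*V ->
  (forall l1 m1 l2 m2 M, P l1 m1 -> P l2 m2 -> m1 + 2*h <= M -> m2 + 2*h <= M -> 0 <= M ->
     (l1 - l2)*W <= V*M) ->
  (forall l1 m1 l2 m2 M, P l1 m1 -> P l2 m2 -> 2*h - l1 <= M -> 2*h - l2 <= M -> 0 <= M ->
     (m1 - m2)*W <= V*M) ->
  P lp mp -> P lq mq -> P 0 0 ->
  (lp - lq)*(lp - lq) + (mp - mq)*(mp - mq) <= 2*(E*E).
Proof.
  intros Hh HV HVW HE Hl Hm Pp Pq P0.
  assert (HE0 : 0 <= E).
  { destruct (Rle_or_lt 0 E); auto. nra. }
  assert (Bnd : forall l m, P l m -> Rabs l <= E /\ Rabs m <= E).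
  { intros l m Hlm.
    assert (A1 : l*W <= V*(2*h + Rabs m)).
    { replace (l*W) with ((l-0)*W) by ring. apply (Hl l m 0 0); auto;
      pose proof (Rle_abs m); pose proof (Rabs_pos m); lra. }
    assert (A2 : -l*W <= V*(2*h + Rabs m)).
    { replace (-l*W) with ((0-l)*W) by ring. apply (Hl 0 0 l m); auto;
      pose proof (Rle_abs m); pose proof (Rabs_pos m); lra. }
    assert (A3 : m*W <= V*(2*h + Rabs l)).
    { replace (m*W) with ((m-0)*W) by ring. apply (Hm l m 0 0); auto;
      pose proof (Rle_abs (-l)); rewrite Rabs_Ropp in *; pose proof (Rabs_pos l); lra. }
    assert (A4 : -m*W <= V*(2*h + Rabs l)).
    { replace (-m*W) with ((0-m)*W) by ring. apply (Hm 0 0 l m); auto;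
      pose proof (Rle_abs (-l)); rewrite Rabs_Ropp in *; pose proof (Rabs_pos l); lra. }
    assert (B1 : Rabs l * W <= V*(2*h + Rabs m)) by (destruct (Rle_or_lt 0 l); [rewrite (Rabs_right l) by lra | rewrite (Rabs_left l) by lra]; lra).
    assert (B2 : Rabs m * W <= V*(2*h + Rabs l)) by (destruct (Rle_or_lt 0 m); [rewrite (Rabs_right m) by lra | rewrite (Rabs_left m) by lra]; lra).
    pose proof (Rabs_pos l). pose proof (Rabs_pos m).
    destruct (Rle_or_lt (Rabs m) (Rabs l)).
    - assert (Rabs l * (W - V) <= E*(W-V)) by nra.
      assert (Rabs l <= E) by (apply Rmult_le_reg_r with (W-V); lra). split; lra.
    - assert (Rabs m * (W - V) <= E*(W-V)) by nra.
      assert (Rabs m <= E) by (apply Rmult_le_reg_r with (W-V); lra). split; lra. }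
  destruct (Bnd _ _ Pp) as [Bl1 Bm1]. destruct (Bnd _ _ Pq) as [Bl2 Bm2].
  pose proof (Rle_abs mp). pose proof (Rle_abs mq). pose proof (Rle_abs (-lp)). pose proof (Rle_abs (-lq)).
  rewrite Rabs_Ropp in *.
  assert (HEW : V*(2*h+E) = E*W) by nra.
  assert (C1 : (lp - lq)*W <= E*W) by (rewrite <- HEW; apply (Hl lp mp lq mq); auto; lra).
  assert (C2 : (lq - lp)*W <= E*W) by (rewrite <- HEW; apply (Hl lq mq lp mp); auto; lra).
  assert (C3 : (mp - mq)*W <= E*W) by (rewrite <- HEW; apply (Hm lp mp lq mq); auto; lra).
  assert (C4 : (mq - mp)*W <= E*W) by (rewrite <- HEW; apply (Hm lq mq lp mp); auto; lra).
  assert (D1 : lp - lq <= E) by (apply Rmult_le_reg_r with W; lra).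
  assert (D2 : lq - lp <= E) by (apply Rmult_le_reg_r with W; lra).
  assert (D3 : mp - mq <= E) by (apply Rmult_le_reg_r with W; lra).
  assert (D4 : mq - mp <= E) by (apply Rmult_le_reg_r with W; lra).
  nra.
Qed.

Lemma const_bound alpha s V W : 0 <= alpha -> alpha < 1/4 -> 0 <= s -> s <= alpha ->
  0 <= V -> V <= 2*s -> W = 1 - 2*s*s ->
  1 - V <= sqrt ((1 + 2 * alpha) / (1 - 4 * alpha)) * (W - V).
Proof.
  intros H0 H1 Hs0 Hs HV0 HV HW.
  set (Q := 1 - 2*alpha - 2*alpha*alpha).
  assert (HQ : 0 < Q) by (unfold Q; nra).
  assert (HWV : Q <= W - V) by (unfold Q; assert (s*s <= alpha*alpha) by (apply Rmult_le_compat; lra); lra).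
  set (rho := (1 - 2*alpha)/Q).
  assert (Hrho1 : 1 <= rho) by (unfold rho; apply Rmult_le_reg_r with Q; [lra|]; unfold Rdiv; rewrite Rmult_assoc, Rinv_l by lra; unfold Q; nra).
  assert (Hrho : rho * rho <= (1 + 2 * alpha) / (1 - 4 * alpha)).
  { unfold rho. apply Rmult_le_reg_r with (Q*Q*(1-4*alpha)); [apply Rmult_lt_0_compat; nra|].
    replace ((1 - 2 * alpha) / Q * ((1 - 2 * alpha) / Q) * (Q * Q * (1 - 4 * alpha))) with
      ((1 - 2*alpha)*(1-2*alpha)*(1-4*alpha)) by (field; lra).
    replace ((1 + 2 * alpha) / (1 - 4 * alpha) * (Q * Q * (1 - 4 * alpha))) with
      ((1 + 2*alpha)*(Q*Q)) by (field; lra).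
    unfold Q. nra. }
  assert (Hc : rho <= sqrt ((1 + 2 * alpha) / (1 - 4 * alpha))).
  { rewrite <- (sqrt_square rho) by lra. apply sqrt_le_1; nra. }
  (* 1 - V <= rho*(W-V): 1 - V = (W - V) + 2 s^2 ; rho*(W-V) = (W-V) + 2a^2 (W-V)/Q >= (W-V) + 2a^2 *)
  assert (Hr : rho = 1 + 2*alpha*alpha/Q) by (unfold rho; replace (1 - 2*alpha) with (Q + 2*alpha*alpha) by (unfold Q; ring); field; lra).
  assert (Hx : 2*alpha*alpha <= 2*alpha*alpha/Q*(W-V)).
  { apply Rmult_le_reg_r with Q; [lra|].
    replace (2 * alpha * alpha / Q * (W - V) * Q) with (2*alpha*alpha*(W-V)) by (field; lra).
    apply Rmult_le_compat_l; nra. }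
  assert (HW2 : 0 <= W - V) by lra.
  assert (rho * (W-V) <= sqrt ((1 + 2 * alpha) / (1 - 4 * alpha)) * (W-V)) by (apply Rmult_le_compat_r; lra).
  rewrite Hr in H. nra.
Qed.

Lemma frame_pair alpha s u p q e1 e2 M : 0 <= alpha <= PI -> unit_vec u -> e1*e1+e2*e2 = 1 ->
  0 <= sin alpha -> sin alpha < cos alpha -> cos alpha <= cc u e1 e2 ->
  wedge alpha s u p -> wedge alpha s u q ->
  AA p s e1 e2 <= M -> AA q s e1 e2 <= M -> 0 <= M ->
  (BB p s e1 e2 - BB q s e1 e2) * (cos alpha * cos alpha - sin alpha * sin alpha)
    <= 2 * cos alpha * sin alpha * M.
Proof.
  intros Ha Hu He Hs HsK Hc Hp Hq HM1 HM2 HM.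
  assert (H1 : cos alpha * cos alpha + sin alpha * sin alpha = 1)
    by (pose proof (sin2_cos2 alpha); unfold Rsqr in *; lra).
  assert (Hcd := cd_unit u e1 e2 Hu He).
  destruct (frame _ _ _ _ _ _ Ha Hu He Hp) as [r1 [Hr1 [Hrr1 Hx1]]].
  destruct (frame _ _ _ _ _ _ Ha Hu He Hq) as [r2 [Hr2 [Hrr2 Hx2]]].
  assert (HK : 0 <= cos alpha) by lra.
  destruct (cone1 _ _ _ _ _ _ _ HK Hs H1 Hcd Hr1 Hrr1 Hx1) as [I1 _].
  destruct (cone1 _ _ _ _ _ _ _ HK Hs H1 Hcd Hr2 Hrr2 Hx2) as [_ I2].
  eapply cone_pair; eauto.
Qed.

Theorem theorem1 (h alpha : R) (g : pt) :
  0 < h -> 0 <= alpha -> alpha < 1/4 -> on_ground g ->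
  exists sp sq : pt,
    on_view h sp /\ on_view h sq /\ sp <> sq /\
    eps_rel_le alpha g (fun s => s = sp \/ s = sq) (on_view h)
      (sqrt ((1 + 2 * alpha) / (1 - 4 * alpha))).
Proof.
  intros Hh Ha0 Ha1 Hg. unfold on_ground in Hg.
  set (g1 := fst g).
  set (sp := (g1 - h, h) : pt). set (sq := (g1 + h, h) : pt).
  exists sp, sq. split; [reflexivity|]. split; [reflexivity|].
  split.
  { intro E. assert (fst sp = fst sq) by (rewrite E; auto). simpl in H. lra. }
  pose proof PI2_1 as HPI.
  assert (Ha : 0 <= alpha <= PI) by lra.
  set (K := cos alpha). set (sg := sin alpha).
  assert (HK : 0 < K) by (apply cos_gt_0; lra).
  assert (Hsg0 : 0 <= sg) by (apply sin_ge_0; lra).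
  assert (Hsg : sg <= alpha).
  { destruct (Req_dec alpha 0) as [E|E].
    - unfold sg. rewrite E, sin_0. lra.
    - left. apply sin_lt_x. lra. }
  assert (H1 : K*K + sg*sg = 1) by (pose proof (sin2_cos2 alpha); unfold Rsqr in *; unfold K, sg; lra).
  set (W := K*K - sg*sg). set (V := 2*K*sg).
  assert (HK1 : K <= 1) by nra.
  assert (HV0 : 0 <= V) by (unfold V; nra).
  assert (HV2 : V <= 2*sg) by (unfold V; nra).
  assert (HW1 : W = 1 - 2*sg*sg) by (unfold W; lra).
  assert (HW2 : W = 2*K*K - 1) by (unfold W; lra).
  assert (HVW : V < W) by nra.
  assert (HWV : W*W + V*V = 1).
  { unfold W, V. transitivity ((K*K+sg*sg)*(K*K+sg*sg)); [ring| rewrite H1; ring]. }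
  assert (HsK : sg < K) by nra.
  set (m := 2*h*V/(1-V)).
  assert (Hm : m*(1-V) = 2*h*V) by (unfold m; field; lra).
  assert (Hm0 : 0 <= m) by (unfold m; apply Rmult_le_pos; [nra| apply Rlt_le, Rinv_0_lt_compat; lra]).
  set (E := 2*h*V/(W-V)).
  assert (HE : E*(W-V) = 2*h*V) by (unfold E; field; lra).
  set (c := sqrt ((1 + 2 * alpha) / (1 - 4 * alpha))).
  assert (Hc : 1 - V <= c*(W - V)) by (apply (const_bound alpha sg V W); auto; lra).
  assert (Hc0 : 0 <= c) by apply sqrt_pos.
  intros d Hd U HU p q Hp Hq.
  assert (Hdm : m <= d).
  { assert (HL := lower h alpha g m V W Hh Ha HK HW2 HV0 ltac:(lra) HWV Hm0 Hm Hg).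
    assert (Adm : admissible_choice alpha g (on_view h) (Ulow h m g)).
    { intros s Hs. destruct (HL s Hs) as [A [B _]]. auto. }
    specialize (Hd _ Adm g (fst g, -m)).
    assert (Hdist : Defs.dist g (fst g, -m) = m).
    { unfold Defs.dist. cbn [fst snd]. rewrite Hg. replace ((fst g - fst g)^2 + (0 - - m)^2) with (m*m) by ring.
      apply sqrt_square; lra. }
    rewrite <- Hdist. apply Hd; intros s Hs; destruct (HL s Hs) as [_ [A B]]; auto. }
  set (i2 := / sqrt 2).
  assert (Hs2 : sqrt 2 * sqrt 2 = 2) by (apply sqrt_sqrt; lra).
  assert (Hs20 : 0 < sqrt 2) by (apply sqrt_lt_R0; lra).
  assert (Hi2 : i2 * i2 = /2) by (unfold i2; rewrite <- Rinv_mult, Hs2; auto).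
  assert (Hi20 : 0 < i2) by (unfold i2; apply Rinv_0_lt_compat; lra).
  assert (He1 : i2*i2 + (-i2)*(-i2) = 1) by nra.
  assert (He2 : (-i2)*(-i2) + (-i2)*(-i2) = 1) by nra.
  destruct (HU sp (or_introl eq_refl)) as [Hup Hwgp].
  destruct (HU sq (or_intror eq_refl)) as [Huq Hwgq].
  assert (Hcp : cos alpha <= cc (U sp) i2 (-i2)).
  { apply (frame_c alpha sp (U sp) g i2 (-i2) (2*h*i2)); auto; try nra.
    - unfold sp, g1; simpl. replace (2*h*i2*i2) with (2*h*(i2*i2)) by ring. rewrite Hi2. field.
    - unfold sp, g1; simpl. rewrite Hg. replace (2*h*i2*(-i2)) with (-(2*h*(i2*i2))) by ring. rewrite Hi2. field. }
  assert (Hcq : cos alpha <= cc (U sq) (-i2) (-i2)).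
  { apply (frame_c alpha sq (U sq) g (-i2) (-i2) (2*h*i2)); auto; try nra.
    - unfold sq, g1; simpl. replace (2*h*i2*(-i2)) with (-(2*h*(i2*i2))) by ring. rewrite Hi2. field.
    - unfold sq, g1; simpl. rewrite Hg. replace (2*h*i2*(-i2)) with (-(2*h*(i2*i2))) by ring. rewrite Hi2. field. }
  set (Pt := fun l mu => exists X : pt, wedge alpha sp (U sp) X /\ wedge alpha sq (U sq) X /\
              l = (fst X - g1) + snd X /\ mu = (fst X - g1) - snd X).
  assert (EA1 : forall X, AA X sp i2 (-i2) = i2 * (((fst X - g1) - snd X) + 2*h)) by (intros; unfold AA, sp; simpl; ring).
  assert (EB1 : forall X, BB X sp i2 (-i2) = i2 * ((fst X - g1) + snd X)) by (intros; unfold BB, sp; simpl; ring).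
  assert (EA2 : forall X, AA X sq (-i2) (-i2) = i2 * (2*h - ((fst X - g1) + snd X))) by (intros; unfold AA, sq; simpl; ring).
  assert (EB2 : forall X, BB X sq (-i2) (-i2) = i2 * ((fst X - g1) - snd X)) by (intros; unfold BB, sq; simpl; ring).
  assert (Hfin := final_alg Pt h W V E ((fst p - g1) + snd p) ((fst p - g1) - snd p)
                    ((fst q - g1) + snd q) ((fst q - g1) - snd q) Hh HV0 HVW HE).
  assert (Hdd : (fst p - fst q)^2 + (snd p - snd q)^2 <= E*E).
  { assert (Hx : (((fst p - g1) + snd p) - ((fst q - g1) + snd q)) * (((fst p - g1) + snd p) - ((fst q - g1) + snd q)) +
           (((fst p - g1) - snd p) - ((fst q - g1) - snd q)) * (((fst p - g1) - snd p) - ((fst q - g1) - snd q)) <= 2*(E*E)).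
    { apply Hfin.
      - intros l1 m1 l2 m2 M [X [X1 [X2 [El1 Em1]]]] [Y [Y1 [Y2 [El2 Em2]]]] HM1 HM2 HM.
        assert (F := frame_pair alpha sp (U sp) X Y i2 (-i2) (i2*M) Ha Hup He1 Hsg0 HsK Hcp X1 Y1).
        rewrite !EA1, !EB1 in F.
        assert (F' : i2*((l1 - l2)*W) <= i2*(V*M)).
        { subst l1 l2 m1 m2. fold K sg W V in F |- *.
          replace (i2 * ((fst X - g1 + snd X - (fst Y - g1 + snd Y)) * W)) with
            ((i2 * (fst X - g1 + snd X) - i2 * (fst Y - g1 + snd Y)) * (K*K - sg*sg)) by (unfold W; ring).
          replace (i2 * (V*M)) with (2*K*sg*(i2*M)) by (unfold V; ring).
          apply F; [apply Rmult_le_compat_l; lra | apply Rmult_le_compat_l; lra | nra]. }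
        apply Rmult_le_reg_l with i2; auto.
      - intros l1 m1 l2 m2 M [X [X1 [X2 [El1 Em1]]]] [Y [Y1 [Y2 [El2 Em2]]]] HM1 HM2 HM.
        assert (F := frame_pair alpha sq (U sq) X Y (-i2) (-i2) (i2*M) Ha Huq He2 Hsg0 HsK Hcq X2 Y2).
        rewrite !EA2, !EB2 in F.
        assert (F' : i2*((m1 - m2)*W) <= i2*(V*M)).
        { subst l1 l2 m1 m2. fold K sg W V in F |- *.
          replace (i2 * ((fst X - g1 - snd X - (fst Y - g1 - snd Y)) * W)) with
            ((i2 * (fst X - g1 - snd X) - i2 * (fst Y - g1 - snd Y)) * (K*K - sg*sg)) by (unfold W; ring).
          replace (i2 * (V*M)) with (2*K*sg*(i2*M)) by (unfold V; ring).
          apply F; [apply Rmult_le_compat_l; lra | apply Rmult_le_compat_l; lra | nra]. }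
        apply Rmult_le_reg_l with i2; auto.
      - exists p. repeat split; auto.
      - exists q. repeat split; auto.
      - exists g. repeat split; auto; unfold g1; rewrite Hg; ring. }
    nra. }
  assert (HE0 : 0 <= E) by (unfold E; apply Rmult_le_pos; [nra| apply Rlt_le, Rinv_0_lt_compat; lra]).
  assert (HcE : E <= c*m).
  { apply Rmult_le_reg_r with (W - V); [lra|]. rewrite HE, <- Hm.
    replace (c*m*(W-V)) with (m*(c*(W-V))) by ring. apply Rmult_le_compat_l; auto. }
  unfold Defs.dist. apply Rle_trans with E.
  - rewrite <- (sqrt_square E) by auto. apply sqrt_le_1; [pose proof (pow2_ge_0 (fst p - fst q)); pose proof (pow2_ge_0 (snd p - snd q)); lra | nra | auto].
  - apply Rle_trans with (c*m); auto. apply Rmult_le_compat_l; auto.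
Qed.
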